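(* Let $\Omega=\mathbb N$, $\Sigma=2^{\mathbb N}$ and $\mu$ a finite measure with $\mu(\{n\})>0$ for all $n$. Let $X(\mu)$ be a Banach rectangular sequence space containing every canonical sequence $e_n$ ($e_n(k)=1$ if $k=n$ and $0$ otherwise), and let $X_0$ be the closure in $X(\mu)$ of $\operatorname{span}\{e_n:n\in\mathbb N\}$. Then $\{e_n\}$ is an unconditional basis for $X_0$.
   Context: A Banach rectangular sequence space is a vector space $X(\mu)$ of real sequences with a complete norm such that for some $C>0$, $\chi_Af\in X(\mu)$ and $\|\chi_Af\|\le C\|f\|$ for all $f\in X(\mu)$, $A\subseteq\mathbb N$. An unconditional basis of $X_0$ is a Schauder basis $\{x_n\}$ (each $x\in X_0$ is uniquely $\sum a_nx_n$) such that for each $x=\sum a_nx_n$ the series $\sum a_{\pi(n)}x_{\pi(n)}$ converges for every permutation $\pi$ of $\mathbb N$. *)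

(* Defs.v *)
From Stdlib Require Import Reals ClassicalEpsilon.
Open Scope R_scope.

Definition rseq := nat -> R.

Definition seq_add (f g : rseq) : rseq := fun k => f k + g k.
Definition seq_scale (a : R) (f : rseq) : rseq := fun k => a * f k.
Definition seq_sub (f g : rseq) : rseq := fun k => f k - g k.
Definition seq_zero : rseq := fun _ => 0.

Definition chi (A : nat -> Prop) (f : rseq) : rseq :=
  fun k => if excluded_middle_informative (A k) then f k else 0.

Definition norm_conv (nrm : rseq -> R) (u : nat -> rseq) (x : rseq) : Prop :=
  forall eps, 0 < eps -> exists N, forall n, (N <= n)%nat -> nrm (seq_sub (u n) x) < eps.

Definition norm_cauchy (nrm : rseq -> R) (u : nat -> rseq) : Prop :=
  forall eps, 0 < eps -> exists N, forall n m, (N <= n)%nat -> (N <= m)%nat ->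
    nrm (seq_sub (u n) (u m)) < eps.

Definition banach_seq_space (X : rseq -> Prop) (nrm : rseq -> R) : Prop :=
  X seq_zero /\
  (forall f g, X f -> X g -> X (seq_add f g)) /\
  (forall a f, X f -> X (seq_scale a f)) /\
  (forall f, X f -> 0 <= nrm f) /\
  (forall f, X f -> nrm f = 0 -> f = seq_zero) /\
  (forall a f, X f -> nrm (seq_scale a f) = Rabs a * nrm f) /\
  (forall f g, X f -> X g -> nrm (seq_add f g) <= nrm f + nrm g) /\
  (forall u : nat -> rseq, (forall n, X (u n)) -> norm_cauchy nrm u ->
     exists x, X x /\ norm_conv nrm u x).

Definition banach_rectangular_seq_space (X : rseq -> Prop) (nrm : rseq -> R) : Prop :=
  banach_seq_space X nrm /\
  exists C, 0 < C /\
    forall f (A : nat -> Prop), X f -> X (chi A f) /\ nrm (chi A f) <= C * nrm f.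

Definition e (n : nat) : rseq := fun k => if Nat.eqb k n then 1 else 0.

Fixpoint psum (a : nat -> R) (b : nat -> rseq) (N : nat) : rseq :=
  match N with
  | O => seq_zero
  | S N' => seq_add (psum a b N') (seq_scale (a N') (b N'))
  end.

Definition span (b : nat -> rseq) (f : rseq) : Prop :=
  exists (N : nat) (a : nat -> R), f = psum a b N.

Definition closure_in (X : rseq -> Prop) (nrm : rseq -> R) (S : rseq -> Prop)
  (f : rseq) : Prop :=
  X f /\ forall eps, 0 < eps -> exists g, S g /\ nrm (seq_sub f g) < eps.

Definition series_conv (nrm : rseq -> R) (a : nat -> R) (b : nat -> rseq) (x : rseq) :=
  norm_conv nrm (psum a b) x.

Definition is_permutation (p : nat -> nat) : Prop :=
  exists q : nat -> nat, (forall n, q (p n) = n) /\ (forall n, p (q n) = n).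

Definition schauder_basis (X0 : rseq -> Prop) (nrm : rseq -> R) (b : nat -> rseq) : Prop :=
  (forall n, X0 (b n)) /\
  (forall x, X0 x -> exists! a : nat -> R, series_conv nrm a b x).

Definition unconditional_basis (X0 : rseq -> Prop) (nrm : rseq -> R) (b : nat -> rseq) : Prop :=
  schauder_basis X0 nrm b /\
  (forall x (a : nat -> R), X0 x -> series_conv nrm a b x ->
     forall p, is_permutation p ->
       exists y, X0 y /\ series_conv nrm (fun n => a (p n)) (fun n => b (p n)) y).

(* Main.v *)
Require Import Defs.
From Stdlib Require Import Reals Lra Lia FunctionalExtensionality ClassicalEpsilon.
Open Scope R_scope.

Lemma psum_chi (f : rseq) (p : nat -> nat)
  (pinj : forall i j, p i = p j -> i = j) N k :
  psum (fun n => f (p n)) (fun n => e (p n)) N k =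
  chi (fun k => exists j, (j < N)%nat /\ p j = k) f k.
Proof.
  induction N; simpl; unfold seq_add, seq_scale, chi, seq_zero, e in *.
  - destruct excluded_middle_informative as [[j [Hj _]]|_]; [lia|reflexivity].
  - rewrite IHN.
    destruct (excluded_middle_informative (exists j, (j < N)%nat /\ p j = k)) as [[j [Hj Hpj]]|Hn];
    destruct (excluded_middle_informative (exists j, (j < S N)%nat /\ p j = k)) as [[j' [Hj' Hpj']]|Hn'];
    destruct (Nat.eqb_spec k (p N)) as [Hk|Hk].
    all: first
      [ ring
      | (rewrite Hk; ring)
      | (exfalso; apply Hn'; exists j; split; [lia|auto])
      | (exfalso; apply Hn'; exists N; split; [lia|auto])
      | (exfalso; rewrite Hk in Hpj; apply pinj in Hpj; lia)
      | (exfalso; destruct (Nat.eq_dec j' N); [subst j'; congruence|];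
         apply Hn; exists j'; split; [lia|auto]) ].
Qed.

Theorem proposition4p7 (X : rseq -> Prop) (nrm : rseq -> R) :
  banach_rectangular_seq_space X nrm ->
  (forall n, X (e n)) ->
  unconditional_basis (closure_in X nrm (span e)) nrm e.
Proof.
  intros [[HX0 [Hadd [Hsc [Hnn [Hdef [Hhom [Htri Hcomp]]]]]]] [C [HC Hrect]]] He.
  assert (Hsub: forall f g, X f -> X g -> X (seq_sub f g)).
  { intros f g Hf Hg. replace (seq_sub f g) with (seq_add f (seq_scale (-1) g)). auto.
    apply functional_extensionality; intro k; unfold seq_sub, seq_add, seq_scale; ring. }
  assert (Hps: forall a N, X (psum a e N)).
  { intros a N; induction N; simpl; auto. }
  assert (Hid: forall i j : nat, (fun n => n) i = (fun n => n) j -> i = j) by auto.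
  assert (Htail: forall x, closure_in X nrm (span e) x -> forall eps, 0 < eps ->
     exists M, forall B : nat -> Prop, (forall k, B k -> (M <= k)%nat) -> nrm (chi B x) < eps).
  { intros x [Hx Hcl] eps Heps.
    destruct (Hcl (eps / C)) as [g [[M [b Hg]] Hxg]].
    { apply Rdiv_lt_0_compat; auto. }
    exists M. intros B HB.
    assert (E: chi B x = chi B (seq_sub x g)).
    { apply functional_extensionality; intro k. unfold chi, seq_sub.
      destruct (excluded_middle_informative (B k)) as [Hb|Hb]; [|reflexivity].
      subst g.
      assert (P: psum b e M k = chi (fun k => exists j, (j < M)%nat /\ j = k) b k)
        by exact (psum_chi b (fun n => n) Hid M k).
      rewrite P. unfold chi.
      destruct excluded_middle_informative as [[j [Hj Hjk]]|_].
      - specialize (HB k Hb). lia.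
      - ring. }
    assert (Hg': X g) by (subst g; apply Hps).
    rewrite E. destruct (Hrect (seq_sub x g) B) as [_ Hle]. apply Hsub; auto.
    apply Rle_lt_trans with (C * nrm (seq_sub x g)); auto.
    apply Rmult_lt_compat_l with (r := C) in Hxg; auto.
    replace (C * (eps / C)) with eps in Hxg by (field; lra). exact Hxg. }
  assert (Hconv: forall x p, closure_in X nrm (span e) x ->
      (forall i j, p i = p j -> i = j) ->
      (forall M, exists N0, forall k, (k < M)%nat -> exists j, (j < N0)%nat /\ p j = k) ->
      norm_conv nrm (psum (fun n => x (p n)) (fun n => e (p n))) x).
  { intros x p Hcx Hinj Hcov eps Heps.
    destruct (Htail x Hcx eps Heps) as [M HM]. destruct (Hcov M) as [N0 HN0].
    exists N0. intros N HN.
    assert (E: seq_sub (psum (fun n => x (p n)) (fun n => e (p n)) N) x =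
               seq_scale (-1) (chi (fun k => ~ (exists j, (j < N)%nat /\ p j = k)) x)).
    { apply functional_extensionality; intro k. unfold seq_sub, seq_scale.
      rewrite (psum_chi x p Hinj N k). unfold chi.
      destruct (excluded_middle_informative (exists j, (j < N)%nat /\ p j = k)) as [H1|H1];
      destruct (excluded_middle_informative (~ exists j, (j < N)%nat /\ p j = k)) as [H2|H2];
      try tauto; ring. }
    destruct Hcx as [Hx Hcl].
    destruct (Hrect x (fun k => ~ (exists j, (j < N)%nat /\ p j = k)) Hx) as [HXc _].
    rewrite E, Hhom by auto. replace (Rabs (-1)) with 1 by (rewrite Rabs_left; lra). rewrite Rmult_1_l.
    apply HM. intros k Hk. destruct (Compare_dec.le_lt_dec M k) as [l|l]; auto.
    exfalso; apply Hk. destruct (HN0 k l) as [j [Hj Hpj]]. exists j; split; [lia|auto]. }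
  assert (Hcoord: forall a x, X x -> series_conv nrm a e x -> a = x).
  { intros a x Hx Hs. apply functional_extensionality; intro n.
    destruct (Req_dec (a n) (x n)) as [|Hne]; auto. exfalso.
    assert (Hen: 0 < nrm (e n)).
    { destruct (Hnn (e n) (He n)) as [|H0]; auto. exfalso.
      apply eq_sym, Hdef in H0; auto.
      assert (H: e n n = seq_zero n) by (rewrite H0; reflexivity).
      unfold e, seq_zero in H. rewrite Nat.eqb_refl in H. lra. }
    assert (Hd: 0 < Rabs (a n - x n)) by (apply Rabs_pos_lt; lra).
    destruct (Hs (Rabs (a n - x n) * nrm (e n) / C)) as [N HN].
    { apply Rdiv_lt_0_compat; [apply Rmult_lt_0_compat|]; auto. }
    specialize (HN (max N (S n)) (Nat.le_max_l _ _)).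
    assert (Hf: X (seq_sub (psum a e (max N (S n))) x)) by (apply Hsub; auto).
    assert (E: chi (fun k => k = n) (seq_sub (psum a e (max N (S n))) x)
               = seq_scale (a n - x n) (e n)).
    { apply functional_extensionality; intro k. unfold chi, seq_scale, seq_sub.
      destruct excluded_middle_informative as [Hk|Hk].
      - subst k.
        assert (P: psum a e (max N (S n)) n =
           chi (fun k => exists j, (j < max N (S n))%nat /\ j = k) a n)
          by exact (psum_chi a (fun n => n) Hid (max N (S n)) n).
        rewrite P. unfold chi, e. rewrite Nat.eqb_refl.
        destruct excluded_middle_informative as [_|Hn'].
        + ring.
        + exfalso; apply Hn'; exists n; split; [lia|auto].
      - unfold e. destruct (Nat.eqb_spec k n); [tauto|ring]. }
    destruct (Hrect _ (fun k => k = n) Hf) as [_ Hle].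
    rewrite E, Hhom in Hle by apply He.
    apply Rmult_lt_compat_l with (r := C) in HN; auto.
    replace (C * (Rabs (a n - x n) * nrm (e n) / C)) with (Rabs (a n - x n) * nrm (e n))
      in HN by (field; lra).
    lra. }
  assert (Hidconv: forall x, closure_in X nrm (span e) x -> series_conv nrm x e x).
  { intros x Hx. exact (Hconv x (fun n => n) Hx Hid
      (fun M => ex_intro _ M (fun k Hk => ex_intro _ k (conj Hk eq_refl)))). }
  split; [split|].
  - intro n. split; [apply He|]. intros eps Heps. exists (e n). split.
    + exists (S n), (e n). apply functional_extensionality; intro k.
      assert (P: psum (e n) e (S n) k =
           chi (fun k => exists j, (j < S n)%nat /\ j = k) (e n) k)
          by exact (psum_chi (e n) (fun n => n) Hid (S n) k).
      rewrite P. unfold chi.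
      destruct excluded_middle_informative as [_|Hn']; [reflexivity|].
      unfold e. destruct (Nat.eqb_spec k n); [|reflexivity].
      exfalso; apply Hn'; exists k; split; [lia|auto].
    + replace (seq_sub (e n) (e n)) with (seq_scale 0 (e n)).
      * rewrite Hhom by apply He. rewrite Rabs_R0. lra.
      * apply functional_extensionality; intro k; unfold seq_sub, seq_scale; ring.
  - intros x Hx. exists x. split; [apply Hidconv; auto|].
    intros a' Ha'. symmetry; apply Hcoord; auto. destruct Hx; auto.
  - intros x a Hx Hs p [q [Hqp Hpq]]. exists x; split; auto.
    rewrite (Hcoord a x (proj1 Hx) Hs). apply Hconv; auto.
    + intros i j H. apply (f_equal q) in H. rewrite !Hqp in H. auto.
    + intro M. induction M as [|M [N0 HN0]].
      * exists 0%nat. intros k Hk; lia.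
      * exists (max N0 (S (q M))). intros k Hk.
        destruct (Nat.eq_dec k M) as [->|Hne].
        -- exists (q M). split; [lia|auto].
        -- destruct (HN0 k ltac:(lia)) as [j [Hj Hpj]]. exists j; split; [lia|auto].
Qed.
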